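(* Let $m=2$ attributes take values in $\{1,\dots,d\}$, let $p(x,z)=p(z)p(x\mid z)$ be a training distribution with attribute support $\mathcal{Z}^{\mathsf{train}}$, and suppose $p(\cdot\mid z)$ is an additive energy distribution, not uniform, for every $z\in\mathcal{Z}^{\times}$. Suppose $\mathsf{DAff}(\mathcal{Z}^{\mathsf{train}})\ne\mathcal{Z}^{\times}$. Then there exists an additive energy model $\hat p(x\mid z)=\frac{1}{\hat{\mathbb{Z}}(z)}\exp(-\langle\sigma(z),\hat E(x)\rangle)$ that maximizes the likelihood and exactly matches the training distributions, i.e. $\hat p(\cdot\mid z)=p(\cdot\mid z)$ for all $z\in\mathcal{Z}^{\mathsf{train}}$, but such that $\hat p(\cdot\mid z)\ne p(\cdot\mid z)$ for some $z\in\mathcal{Z}^{\times}$.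
   Context: $\sigma(z)\in\{0,1\}^{2d}$ is the concatenation of the one-hot encodings of $z_1,z_2$. An additive energy distribution family is $p(x\mid z)=\frac{1}{\mathbb{Z}(z)}\exp(-\langle\sigma(z),E(x)\rangle)$ with $E:\mathbb{R}^n\to\mathbb{R}^{2d}$ and $\mathbb{Z}(z)=\int\exp(-\langle\sigma(z),E(x)\rangle)dx<\infty$. $\mathcal{Z}_i^{\mathsf{train}}$ is the set of values of the $i$-th coordinate on $\mathcal{Z}^{\mathsf{train}}$ and $\mathcal{Z}^{\times}=\mathcal{Z}_1^{\mathsf{train}}\times\mathcal{Z}_2^{\mathsf{train}}$. For finite $\mathcal{A}=\{z^{(1)},\dots,z^{(k)}\}$, $\mathsf{DAff}(\mathcal{A})=\{z\in\{1,\dots,d\}^2:\exists\alpha\in\mathbb{R}^k,\ \sum_i\alpha_i=1,\ \sigma(z)=\sum_i\alpha_i\sigma(z^{(i)})\}$. *)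

(* Defs.v *)
From HB Require Import structures.
From mathcomp Require Import all_boot all_order all_algebra.
From mathcomp Require Import all_classical all_reals all_analysis.
Set Implicit Arguments. Unset Strict Implicit. Unset Printing Implicit Defensive.
Import Order.TTheory GRing.Theory Num.Theory.
Local Open Scope classical_set_scope.
Local Open Scope ring_scope.

Section Defs.
Variable R : realType.

(* one-hot encoding of a value in {1,...,d} (represented by 'I_d) *)
Definition onehot (d : nat) (i : 'I_d) : 'rV[R]_d := delta_mx 0 i.

Definition sigma (d : nat) (z : 'I_d * 'I_d) : 'rV[R]_(d + d) :=
  row_mx (onehot z.1) (onehot z.2).

Definition pairing (k : nat) (u v : 'rV[R]_k) : R := \sum_(i < k) u 0 i * v 0 i.

Definition DAff (d : nat) (A : {set 'I_d * 'I_d}) : set ('I_d * 'I_d) :=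
  [set z | exists alpha : 'I_d * 'I_d -> R,
      \sum_(w in A) alpha w = 1 /\ sigma z = \sum_(w in A) alpha w *: sigma w].

Definition Zcross (d : nat) (A : {set 'I_d * 'I_d}) : {set 'I_d * 'I_d} :=
  finset.setX (finset (fun i => [exists w in A, w.1 == i]))
       (finset (fun i => [exists w in A, w.2 == i])).

Definition gibbs (n d : nat) (E : n.-tuple R -> 'rV[R]_(d + d))
  (z : 'I_d * 'I_d) (x : n.-tuple R) : R :=
  expR (- pairing (sigma z) (E x)).

Definition partition (n d : nat) (mu : {measure set (n.-tuple R) -> \bar R})
  (E : n.-tuple R -> 'rV[R]_(d + d)) (z : 'I_d * 'I_d) : \bar R :=
  (\int[mu]_x (gibbs E z x)%:E)%E.

Definition aed (n d : nat) (mu : {measure set (n.-tuple R) -> \bar R})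
  (E : n.-tuple R -> 'rV[R]_(d + d)) (z : 'I_d * 'I_d) (x : n.-tuple R) : R :=
  gibbs E z x / fine (partition mu E z).

Definition additive_energy_family (n d : nat)
  (mu : {measure set (n.-tuple R) -> \bar R})
  (S : {set 'I_d * 'I_d}) (E : n.-tuple R -> 'rV[R]_(d + d)) : Prop :=
  forall z, z \in S -> mu.-integrable setT (fun x => (gibbs E z x)%:E).

(* mu is the Lebesgue measure on R^n = n.-tuple R (with the product Borel
   sigma-algebra): it gives every half-open box its volume.  This determines
   mu uniquely (pi-lambda theorem, boxes are finite and cover R^n). *)
Definition is_lebesgue_tuple (n : nat)
  (mu : {measure set (n.-tuple R) -> \bar R}) : Prop :=
  forall a b : n.-tuple R, (forall i, tnth a i <= tnth b i) ->
    mu [set x | forall i, tnth a i <= tnth x i < tnth b i] =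
    (\prod_(i < n) (tnth b i - tnth a i))%:E.

End Defs.
Arguments DAff {R d} A.

(* Main.v *)
Require Import Defs.
From HB Require Import structures.
From mathcomp Require Import all_boot all_order all_algebra.
From mathcomp Require Import all_classical all_reals all_analysis.
From mathcomp Require Import measurable_realfun.
Import Order.TTheory GRing.Theory Num.Theory.
Local Open Scope classical_set_scope.
Local Open Scope ring_scope.
Section LA.
Variables (R : realType) (d : nat).
Implicit Types (z w : 'I_d * 'I_d).

Lemma sigma_l z i : sigma R z 0 (lshift d i) = (i == z.1)%:R.
Proof. by rewrite /sigma row_mxEl /onehot mxE eqxx. Qed.

Lemma sigma_r z i : sigma R z 0 (rshift d i) = (i == z.2)%:R.
Proof. by rewrite /sigma row_mxEr /onehot mxE eqxx. Qed.

Lemma sum_entry (S : {set 'I_d * 'I_d}) (alpha : _ -> R) k :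
  (\sum_(w in S) alpha w *: sigma R w) 0 k = \sum_(w in S) alpha w * sigma R w 0 k.
Proof. by rewrite summxE; apply: eq_bigr => w _; rewrite mxE. Qed.

Lemma sigma_lsum z : \sum_(i < d) sigma R z 0 (lshift d i) = 1.
Proof.
rewrite (bigD1 z.1) //= sigma_l eqxx big1 ?addr0 // => j /negbTE.
by rewrite sigma_l => ->.
Qed.

Lemma DAff_sub (S : {set 'I_d * 'I_d}) z : @DAff R d S z -> z \in Zcross S.
Proof.
case=> alpha [_ Hz].
have key : forall (f : 'I_d * 'I_d -> 'I_d) k,
   sigma R z 0 k = 1 -> (forall w, sigma R w 0 k = (f z == f w)%:R) ->
   [exists w in S, f w == f z].
  move=> f k H1 Hw; case: (boolP [exists w in S, f w == f z]) => // Hn.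
  move: H1; rewrite Hz sum_entry big1; first by move=> /esym/eqP; rewrite oner_eq0.
  move=> w wS; rewrite Hw; case: eqP => [E|]; last by rewrite mulr0.
  by move: Hn; rewrite negb_exists => /forallP /(_ w); rewrite wS E eqxx.
rewrite /Zcross (surjective_pairing z) finset.in_setX !finset.in_set; apply/andP; split.
  apply: (key fst (lshift d z.1)); first by rewrite sigma_l eqxx.
  by move=> w; rewrite sigma_l.
apply: (key snd (rshift d z.2)); first by rewrite sigma_r eqxx.
by move=> w; rewrite sigma_r.
Qed.


Lemma affine_of_lin (S : {set 'I_d * 'I_d}) (alpha : _ -> R) z :
  sigma R z = \sum_(w in S) alpha w *: sigma R w -> @DAff R d S z.
Proof.
move=> Hz; exists alpha; split => //.
rewrite -(sigma_lsum z) Hz.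
under [RHS]eq_bigr do rewrite sum_entry.
rewrite exchange_big /=; apply: eq_bigr => w _.
by rewrite -mulr_sumr sigma_lsum mulr1.
Qed.

Definition Amx (S : {set 'I_d * 'I_d}) : 'M[R]_(#|S|, d + d) :=
  \matrix_(i < #|S|) sigma R (enum_val i).

Lemma span_DAff (S : {set 'I_d * 'I_d}) w0 (w0S : w0 \in S) z :
  (sigma R z <= Amx S)%MS -> @DAff R d S z.
Proof.
case/submxP => D HD.
apply: (@affine_of_lin S (fun w => D 0 (enum_rank_in w0S w))).
rewrite HD mulmx_sum_row [RHS]big_enum_val /=.
apply: eq_bigr => i _; rewrite enum_valK_in /Amx rowK //.
Qed.


Lemma pairing_mx k (u : 'rV[R]_k) (K : 'M[R]_k) c :
  pairing u (col c K)^T = (u *m K) 0 c.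
Proof. by rewrite /pairing mxE; apply: eq_bigr => i _; rewrite !mxE. Qed.

Lemma separate (S : {set 'I_d * 'I_d}) w0 (w0S : w0 \in S) z :
  ~ @DAff R d S z -> exists v : 'rV[R]_(d + d),
    (forall w, w \in S -> pairing (sigma R w) v = 0) /\
    pairing (sigma R z) v != 0.
Proof.
move=> nD.
have nsub : ~~ (sigma R z <= Amx S)%MS.
  by apply/negP => /(@span_DAff S w0 w0S z).
rewrite submxE in nsub.
case: (boolP [exists c, (sigma R z *m cokermx (Amx S)) 0 c != 0]); last first.
  move=> /existsPn H; exfalso; move/negP: nsub; apply; apply/eqP/rowP => c.
  by rewrite [RHS]mxE; apply/eqP; move: (H c); rewrite negbK.
case/existsP => c Hc; exists (col c (cokermx (Amx S)))^T; split; last first.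
  by rewrite pairing_mx.
move=> w wS; rewrite pairing_mx.
have -> : sigma R w = row (enum_rank_in w0S w) (Amx S).
  by rewrite /Amx rowK enum_rankK_in.
by rewrite -row_mul mulmx_coker !mxE.
Qed.

End LA.

Lemma pairingD (R : realType) k (u v w : 'rV[R]_k) :
  pairing u (v + w) = pairing u v + pairing u w.
Proof. by rewrite /pairing -big_split; apply: eq_bigr => i _; rewrite mxE mulrDr. Qed.

Lemma pairingZ (R : realType) k (u v : 'rV[R]_k) a :
  pairing u (a *: v) = a * pairing u v.
Proof. by rewrite /pairing mulr_sumr; apply: eq_bigr => i _; rewrite mxE mulrCA. Qed.

Theorem theorem10 (R : realType) (n d : nat)
  (mu : {measure set (n.-tuple R) -> \bar R})
  (Ztrain : {set 'I_d * 'I_d})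
  (p : 'I_d * 'I_d -> n.-tuple R -> R) :
  is_lebesgue_tuple mu ->
  (exists E : n.-tuple R -> 'rV[R]_(d + d),
      additive_energy_family mu (Zcross Ztrain) E /\
      forall z, z \in Zcross Ztrain -> {ae mu, forall x, p z x = aed mu E z x}) ->
  (forall z, z \in Zcross Ztrain -> ~ exists c : R, {ae mu, forall x, p z x = c}) ->
  @DAff R d Ztrain <> [set z | z \in Zcross Ztrain] ->
  exists Ehat : n.-tuple R -> 'rV[R]_(d + d),
    additive_energy_family mu (Zcross Ztrain) Ehat /\
    (forall z, z \in Ztrain -> {ae mu, forall x, aed mu Ehat z x = p z x}) /\
    (exists z, z \in Zcross Ztrain /\
       ~ {ae mu, forall x, aed mu Ehat z x = p z x}).
Proof.
move=> _ [E [HE Hp]] Hnc Hneq.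
have [zs [zsZ zsD]] : exists zs, zs \in Zcross Ztrain /\ ~ @DAff R d Ztrain zs.
  apply: contrapT => H; apply: Hneq; rewrite eqEsubset; split => z.
    exact: DAff_sub.
  move=> /= zZ; apply: contrapT => nD; apply: H; exists z; by split.
have [w0 w0S] : exists w0, w0 \in Ztrain.
  move: zsZ; rewrite /Zcross (surjective_pairing zs) finset.in_setX finset.in_set.
  by case/andP => /existsP [w0 /andP [w0S _]] _; exists w0.
have [v [Hv0 Hva]] := @separate R d Ztrain w0 w0S zs zsD.
set a := pairing (sigma R zs) v in Hva.
set f := gibbs E zs.
have mf : measurable_fun setT f.
  by apply/measurable_EFinP; exact: (measurable_int _ (HE zs zsZ)).
pose g x := expR (- f x).
have mg : measurable_fun setT g.
  apply: measurableT_comp; first exact: measurable_expR.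
  exact: measurable_funN.
pose Ehat x := E x + g x *: v.
have gh : forall z x, gibbs Ehat z x =
    gibbs E z x * expR (- (g x * pairing (sigma R z) v)).
  by move=> z x; rewrite /gibbs /Ehat pairingD pairingZ opprD expRD.
have g01 : forall x, 0 < g x <= 1.
  move=> x; rewrite expR_gt0 /= expR_le1 oppr_le0 /f /gibbs; exact/ltW/expR_gt0.
exists Ehat; split.
  move=> z zZ.
  set b := pairing (sigma R z) v.
  pose h x := expR (- (g x * b)).
  have mh : measurable_fun setT h.
    apply: measurableT_comp; first exact: measurable_expR.
    apply: measurable_funN; apply: measurable_funM => //.
  have bh : [bounded h x | x in setT].
    exists (expR `|b|); split; first by rewrite num_real.
    move=> M HM x _ /=.
    rewrite ger0_norm; last exact/ltW/expR_gt0.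
    apply/ltW/(le_lt_trans _ HM); rewrite ler_expR.
    apply: (le_trans (ler_norm _)); rewrite normrN normrM.
    have /andP [g0 g1] := g01 x.
    by rewrite ger0_norm ?(ltW g0) // ler_piMl.
  have := integrableMl _ (HE z zZ) mh bh.
  move=> /(_ measurableT) Hi; apply: eq_integrable Hi => // x _ /=; by rewrite gh.
split.
  move=> w wS.
  have wZ : w \in Zcross Ztrain.
    rewrite /Zcross (surjective_pairing w) finset.in_setX !finset.in_set.
    by apply/andP; split; apply/existsP; exists w; rewrite wS eqxx.
  have eqg : gibbs Ehat w = gibbs E w.
    by apply/funext => x; rewrite gh Hv0 // mulr0 oppr0 expR0 mulr1.
  move: (Hp w wZ); apply: filterS => x /= ->.
  by rewrite /aed /Defs.partition eqg.
exists zs; split => // Hae; apply: (Hnc zs zsZ).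
have H2 := Hp zs zsZ.
case: (pselect (exists x0, p zs x0 = aed mu E zs x0 /\ aed mu Ehat zs x0 = p zs x0)); last first.
  move=> Hn; exists 0; apply: filterS2 H2 Hae => x e1 e2; exfalso; apply: Hn.
  by exists x.
case=> x0 [h1 h2]; exists (p zs x0); apply: filterS2 H2 Hae => x e1 e2.
set Zh := fine (Defs.partition mu Ehat zs).
set Z := fine (Defs.partition mu E zs).
have key : forall y, p zs y = aed mu E zs y -> aed mu Ehat zs y = p zs y ->
    expR (- (g y * a)) * Zh^-1 = Z^-1.
  move=> y k1 k2; move: k2; rewrite k1 /aed -/Zh -/Z gh -/f -/a -mulrA.
  apply: mulfI; rewrite gt_eqF //; exact: expR_gt0.
have [Z0|Z0] := eqVneq Z^-1 0.
  by rewrite e1 h1 /aed -/Z Z0 !mulr0.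
have k := key x e1 e2; rewrite -(key x0 h1 h2) in k.
have Zh0 : Zh^-1 != 0.
  by apply: contra Z0 => /eqP Zh0; rewrite -(key x0 h1 h2) Zh0 mulr0.
move/(mulIf Zh0)/expR_inj/oppr_inj/(mulIf Hva)/expR_inj/oppr_inj: k => fx.
by rewrite e1 h1 /aed /= -/f fx.
Qed.
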